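(* Let $b>0$, $\sigma>0$, $p>0$, and let $A$, $c$, $\phi$ be as follows: $A\subseteq\mathbb{R}$ is closed with smallest element $\theta_*$; $c:A\to\mathbb{R}$ is nondecreasing and left-continuous with $c(\theta_* )=0$, $c(x)>0$ for $x>\theta_*$, and, if $A$ is unbounded, $\inf\{c(x)/x:x\in A,x\ge y\}\uparrow\infty$ as $y\uparrow\infty$; $\phi(y)=\sup_{x\in A}\{yx-c(x)\}$ for $y\ge0$. Let $\gamma(p)$ be the unique number in $(\phi_*(p),\infty)$, where $\phi_*(p)=-\inf\{\phi(y):y\in[0,p]\}$, with $\tfrac12\sigma^2\int_0^p\frac{du}{\phi(u)+\gamma(p)}=b$; let $G(v,p)=\tfrac12\sigma^2\int_0^v\frac{du}{\phi(u)+\gamma(p)}$ for $v\in[0,p]$; let $v(\cdot,p):[0,b]\to[0,p]$ be the inverse of $G(\cdot,p)$; and let $f(z,p)=\int_0^z v(y,p)\,dy$ for $z\in[0,b]$. Then $f(\cdot,p)$ is nonnegative, nondecreasing, strictly convex and belongs to $\mathcal{C}^2[0,b]$. Moreover, $f=f(\cdot,p)$ and $\gamma=\gamma(p)$ satisfy $$\gamma=\min_{x\in A}\Big\{\tfrac12\sigma^2f''(z)-xf'(z)+c(x)\Big\}\quad\text{for all }z\in(0,b),$$ together with the boundary conditions $f'(0)=0$ and $f'(b)=p$.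
   Context: $\mathcal{C}^2[0,b]$ is the space of functions $f:[0,b]\to\mathbb{R}$ that are twice continuously differentiable on $(0,b)$ with first and second derivatives having finite limits at the endpoints. The supremum defining $\phi(y)$ is finite and attained for each $y\ge0$. *)

(* Defs.v *)
From Stdlib Require Import Reals.
From Coquelicot Require Import Coquelicot.
Open Scope R_scope.

Definition phi (A : R -> Prop) (c : R -> R) (y : R) : R :=
  real (Lub_Rbar (fun r => exists x, A x /\ r = y * x - c x)).

Definition phi_star (A : R -> Prop) (c : R -> R) (p : R) : R :=
  - real (Glb_Rbar (fun r => exists y, 0 <= y <= p /\ r = phi A c y)).

Definition Gfun (A : R -> Prop) (c : R -> R) (sigma gamma v : R) : R :=
  (1/2) * sigma ^ 2 * RInt (fun u => / (phi A c u + gamma)) 0 v.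

Definition C2_closed (f : R -> R) (b : R) : Prop :=
  (forall z, 0 < z < b ->
     ex_derive f z /\ ex_derive (Derive f) z /\ continuous (Derive_n f 2) z) /\
  (exists l, filterlim (Derive f) (at_right 0) (locally l)) /\
  (exists l, filterlim (Derive f) (at_left b) (locally l)) /\
  (exists l, filterlim (Derive_n f 2) (at_right 0) (locally l)) /\
  (exists l, filterlim (Derive_n f 2) (at_left b) (locally l)).

(* Main.v *)
Require Import Defs.
From Stdlib Require Import Reals Lra Classical Ranalysis5.
From Coquelicot Require Import Coquelicot.
Open Scope R_scope.


Lemma ball_R (a e x : R) : Rabs (x - a) < e -> ball a e x.
Proof. intros H. exact H. Qed.
Lemma ball_R' (a e x : R) : ball a e x -> Rabs (x - a) < e.
Proof. intros H. exact H. Qed.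

Lemma lip_cont (f : R -> R) (K x : R) :
  (forall a b, Rabs (f a - f b) <= K * Rabs (a - b)) -> continuous f x.
Proof.
  intros H. apply continuity_pt_filterlim.
  intros eps Heps.
  assert (HK : 0 <= K).
  { specialize (H 1 0). assert (0 <= Rabs (f 1 - f 0)) by apply Rabs_pos.
    replace (1 - 0) with 1 in H by ring. rewrite Rabs_R1 in H. lra. }
  exists (eps / (K + 1)). split.
  - apply Rdiv_lt_0_compat; lra.
  - intros y [_ Hy]. simpl in *. unfold R_dist, Rdist in *.
    eapply Rle_lt_trans. apply H.
    apply Rle_lt_trans with (K * (eps / (K+1))).
    + apply Rmult_le_compat_l. lra. unfold Rdist in Hy. lra.
    + apply Rlt_le_trans with ((K+1) * (eps/(K+1))).
      * apply Rmult_lt_compat_r. apply Rdiv_lt_0_compat; lra. lra.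
      * right. field. lra.
Qed.


Lemma maximizer (A : R -> Prop) (c : R -> R) (theta y R : R) :
 closed A -> A theta -> (forall x, A x -> theta <= x) ->
 (forall x y, A x -> A y -> x <= y -> c x <= c y) ->
 (forall x, A x -> filterlim c (within (fun y => A y /\ y <= x) (locally x)) (locally (c x))) ->
 c theta = 0 -> 0 <= y -> theta <= R ->
 (forall x, A x -> R < x -> y*x - c x < y*theta) ->
 exists x0, A x0 /\ x0 <= R /\ forall x, A x -> y*x - c x <= y*x0 - c x0.
Proof.
  intros hAcl hAt hmin hmono hleft hct hy hR hbig.
  assert (hc0 : forall x, A x -> 0 <= c x).
  { intros x Ax. rewrite <- hct. apply hmono; auto. }
  set (g := fun x => y*x - c x).
  set (S := fun r => exists x, A x /\ r = g x).
  assert (HSb : bound S).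
  { exists (y*R). intros r [x [Ax ->]]. unfold g.
    destruct (Rle_or_lt x R).
    - specialize (hc0 x Ax). assert (y*x <= y*R) by (apply Rmult_le_compat_l; lra). lra.
    - specialize (hbig x Ax H). assert (y*theta <= y*R) by (apply Rmult_le_compat_l; lra). lra. }
  destruct (completeness S HSb) as [s [Hsub Hsl]].
  { exists (g theta). exists theta. auto. }
  assert (Happ : forall e, 0 < e -> exists x, A x /\ s - e < g x).
  { intros e He. apply NNPP. intros Hn. assert (s <= s - e). apply Hsl.
    intros r [x [Ax ->]]. apply Rnot_lt_le. intros Hl. apply Hn. exists x. auto. lra. }
  set (T := fun t => forall e, 0 < e -> exists x, A x /\ x <= t /\ s - e < g x).
  assert (TR : T R).
  { intros e He. destruct (Happ e He) as [x [Ax Hx]].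
    destruct (Rle_or_lt x R) as [Hl|Hl].
    - exists x. auto.
    - exists theta. split; auto. split; auto. specialize (hbig x Ax Hl). unfold g in *.
      rewrite hct. lra. }
  assert (Tmono : forall t t', T t -> t <= t' -> T t').
  { intros t t' Ht Htt e He. destruct (Ht e He) as [x [Ax [Hx1 Hx2]]]. exists x.
    repeat split; auto. lra. }
  set (E' := fun u => T (-u)).
  assert (HEb : bound E').
  { exists (-theta). intros u Hu. destruct (Hu 1 Rlt_0_1) as [x [Ax [Hx _]]].
    specialize (hmin x Ax). lra. }
  destruct (completeness E' HEb) as [m [Hmu Hml]].
  { exists (-R). unfold E'. rewrite Ropp_involutive. exact TR. }
  set (xs := -m).
  assert (Ha : forall t, T t -> xs <= t).
  { intros t Ht. assert (-t <= m). apply Hmu. unfold E'. rewrite Ropp_involutive; auto.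
    unfold xs; lra. }
  assert (Hb : forall t, xs < t -> T t).
  { intros t Ht. apply NNPP. intros Hn. assert (m <= -t).
    { apply Hml. intros u Hu. apply Rnot_lt_le. intros Hl. apply Hn.
      apply Tmono with (-u). exact Hu. lra. }
    unfold xs in Ht. lra. }
  assert (Hc : forall t, t < xs -> exists e, 0 < e /\ forall x, A x -> x <= t -> g x <= s - e).
  { intros t Ht. apply NNPP. intros Hn. assert (xs <= t). apply Ha.
    intros e He. apply NNPP. intros Hn2. apply Hn. exists e. split; auto.
    intros x Ax Hx. apply Rnot_lt_le. intros Hl. apply Hn2. exists x. auto. lra. }
  assert (Axs : A xs).
  { apply hAcl. intros [d Hd].
    assert (hd : 0 < d) by apply cond_pos.
    destruct (Hc (xs - d/2)) as [e1 [He1 H1]]. lra.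
    destruct (Hb (xs + d/2)) with e1 as [x [Ax [Hx1 Hx2]]]. lra. auto.
    destruct (Rle_or_lt x (xs - d/2)) as [Hl|Hl].
    - specialize (H1 x Ax Hl). lra.
    - apply (Hd x). apply ball_R. apply Rabs_def1; lra. exact Ax. }
  assert (Hgs : g xs = s).
  { assert (g xs <= s). apply Hsub. exists xs; auto.
    destruct (Rle_lt_or_eq_dec _ _ H) as [Hlt|]; auto. exfalso.
    set (eta := s - g xs).
    assert (Heta : 0 < eta) by (unfold eta; lra).
    assert (Heq : eta = s - g xs) by reflexivity. clearbody eta.
    assert (He4 : 0 < eta/4) by lra.
    specialize (hleft xs Axs). apply filterlim_locally with (eps := mkposreal (eta/4) He4) in hleft.
    destruct hleft as [d1 Hd1].
    assert (hd1 : 0 < d1) by apply cond_pos.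
    set (d := Rmin (d1/2) (eta/(4*(y+1)))).
    assert (hd : 0 < d). { unfold d. apply Rmin_glb_lt. lra. apply Rdiv_lt_0_compat; lra. }
    assert (hdd1 : d <= d1/2) by apply Rmin_l.
    assert (hyd : y * d <= eta/4).
    { assert (d <= eta/(4*(y+1))) by apply Rmin_r.
      apply Rle_trans with ((y+1)*d). nra.
      apply Rle_trans with ((y+1)*(eta/(4*(y+1)))). apply Rmult_le_compat_l; lra.
      right. field. lra. }
    destruct (Hc (xs - d)) as [e1 [He1 H1]]. lra.
    destruct (Hb (xs + d)) with (Rmin e1 (eta/2)) as [x [Ax [Hx1 Hx2]]]. lra.
    apply Rmin_glb_lt; lra.
    assert (Rmin e1 (eta/2) <= e1) by apply Rmin_l.
    assert (Rmin e1 (eta/2) <= eta/2) by apply Rmin_r.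
    destruct (Rle_or_lt x (xs - d)) as [Hl|Hl].
    - specialize (H1 x Ax Hl). lra.
    - destruct (Rle_or_lt x xs) as [Hl2|Hl2].
      + assert (Hb1 : ball xs d1 x). { apply ball_R. apply Rabs_def1; lra. }
        specialize (Hd1 x Hb1 (conj Ax Hl2)). apply ball_R' in Hd1. simpl in Hd1.
        apply Rabs_def2 in Hd1. unfold g in *.
        assert (y * x <= y * xs) by (apply Rmult_le_compat_l; lra). lra.
      + assert (c xs <= c x) by (apply hmono; auto; lra).
        unfold g in *. assert (y * x <= y * xs + y * d).
        { rewrite <- Rmult_plus_distr_l. apply Rmult_le_compat_l; lra. }
        lra. }
  exists xs. split; auto. split.
  - apply Rnot_lt_le. intros Hl. specialize (hbig xs Axs Hl).
    assert (g theta <= s) by (apply Hsub; exists theta; auto).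
    unfold g in *. rewrite hct in *. lra.
  - intros x Ax. change (g x <= g xs). rewrite Hgs. apply Hsub. exists x; auto.
Qed.


Lemma bound_R (A : R -> Prop) (c : R -> R) (theta P : R) :
  A theta -> (forall x, A x -> theta <= x) ->
  (~ (exists M, forall x, A x -> x <= M) ->
     forall M, exists Y, forall y, Y <= y ->
       Rbar_le (Finite M) (Glb_Rbar (fun r => exists x, A x /\ y <= x /\ r = c x / x))) ->
  0 <= P ->
  exists R, theta <= R /\ forall y, 0 <= y <= P -> forall x, A x -> R < x -> y*x - c x < y*theta.
Proof.
  intros hAt hmin hgr hP.
  destruct (classic (exists M, forall x, A x -> x <= M)) as [[M HM]|HU].
  - exists (Rmax theta M). split. apply Rmax_l. intros y hy x Ax Hx.
    specialize (HM x Ax). assert (M <= Rmax theta M) by apply Rmax_r. lra.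
  - destruct (hgr HU (P+1)) as [Y HY].
    set (R := Rmax (Rmax Y 1) (Rmax theta (P*Rabs theta + 1))).
    assert (h1 : Y <= R /\ 1 <= R /\ theta <= R /\ P*Rabs theta + 1 <= R).
    { unfold R. repeat split.
      - eapply Rle_trans; [apply Rmax_l|apply Rmax_l].
      - eapply Rle_trans; [apply Rmax_r|apply Rmax_l].
      - eapply Rle_trans; [apply Rmax_l|apply Rmax_r].
      - eapply Rle_trans; [apply Rmax_r|apply Rmax_r]. }
    exists R. split. tauto. intros y hy x Ax Hx.
    specialize (HY R (proj1 h1)).
    destruct (Glb_Rbar_correct (fun r => exists x, A x /\ R <= x /\ r = c x / x)) as [Hlb _].
    assert (Hx' : Rbar_le (Finite (P+1)) (Finite (c x / x))).
    { eapply Rbar_le_trans. exact HY. apply Hlb. exists x. repeat split; auto. lra. }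
    simpl in Hx'.
    assert (hx0 : 0 < x) by lra.
    assert (hcx : (P+1)*x <= c x).
    { replace (c x) with ((c x / x) * x) by (field; lra). apply Rmult_le_compat_r; lra. }
    assert (y*x <= P*x) by (apply Rmult_le_compat_r; lra).
    assert (- (P * Rabs theta) <= y*theta).
    { assert (y * Rabs theta <= P * Rabs theta) by (apply Rmult_le_compat_r; [apply Rabs_pos|lra]).
      assert (-(y*Rabs theta) <= y*theta).
      { destruct (Rle_or_lt 0 theta).
        - rewrite Rabs_right by lra. assert (0 <= y*theta) by (apply Rmult_le_pos; lra). lra.
        - rewrite Rabs_left by lra. lra. }
      lra. }
    lra.
Qed.

Lemma phi_eq (A : R -> Prop) (c : R -> R) (y x0 : R) :
  A x0 -> (forall x, A x -> y*x - c x <= y*x0 - c x0) -> phi A c y = y*x0 - c x0.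
Proof.
  intros Ax0 Hmax. unfold phi.
  rewrite (is_lub_Rbar_unique _ (Finite (y*x0 - c x0))). reflexivity.
  split.
  - intros r [x [Ax ->]]. simpl. apply Hmax; auto.
  - intros l Hl. apply Hl. exists x0. auto.
Qed.

Definition clamp (a b u : R) := Rmax a (Rmin b u).

Lemma clamp_lip a b u1 u2 : Rabs (clamp a b u1 - clamp a b u2) <= Rabs (u1 - u2).
Proof.
  unfold clamp, Rmax, Rmin.
  repeat destruct Rle_dec; unfold Rabs; repeat destruct Rcase_abs; lra.
Qed.

Lemma clamp_in a b u : a <= b -> a <= clamp a b u <= b.
Proof. intros. unfold clamp, Rmax, Rmin. repeat destruct Rle_dec; lra. Qed.

Lemma clamp_id a b u : a <= u <= b -> clamp a b u = u.
Proof. intros. unfold clamp, Rmax, Rmin. repeat destruct Rle_dec; lra. Qed.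


Lemma loc_int (a b y : R) : a < y < b -> locally y (fun t => a < t < b).
Proof.
  intros H. assert (Hp : 0 < Rmin (y - a) (b - y)) by (apply Rmin_glb_lt; lra).
  exists (mkposreal _ Hp). intros t Ht. apply ball_R' in Ht. simpl in Ht.
  assert (Rmin (y - a) (b - y) <= y - a) by apply Rmin_l.
  assert (Rmin (y - a) (b - y) <= b - y) by apply Rmin_r.
  apply Rabs_def2 in Ht. lra.
Qed.

Lemma Rabs_bound_lip (d x K : R) : Rabs x <= K -> Rabs (d * x) <= K * Rabs d.
Proof.
  intros H. rewrite Rabs_mult. rewrite Rmult_comm. apply Rmult_le_compat_r. apply Rabs_pos. exact H.
Qed.

Theorem proposition7
  (b sigma p : R) (A : R -> Prop) (c : R -> R) (theta : R)
  (gamma : R) (v : R -> R)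
  (hb : 0 < b) (hsigma : 0 < sigma) (hp : 0 < p)
  (hAclosed : closed A)
  (htheta : A theta /\ (forall x, A x -> theta <= x))
  (hcmono : forall x y, A x -> A y -> x <= y -> c x <= c y)
  (hcleft : forall x, A x ->
     filterlim c (within (fun y => A y /\ y <= x) (locally x)) (locally (c x)))
  (hctheta : c theta = 0)
  (hcpos : forall x, A x -> theta < x -> 0 < c x)
  (hgrowth : ~ (exists M, forall x, A x -> x <= M) ->
     forall M, exists Y, forall y, Y <= y ->
       Rbar_le (Finite M) (Glb_Rbar (fun r => exists x, A x /\ y <= x /\ r = c x / x)))
  (hgamma : phi_star A c p < gamma /\ Gfun A c sigma gamma p = b)
  (hv : forall y, 0 <= y <= b -> 0 <= v y <= p /\ Gfun A c sigma gamma (v y) = y) :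
  let f := fun z => RInt v 0 z in
  (forall z, 0 <= z <= b -> 0 <= f z) /\
  (forall z1 z2, 0 <= z1 -> z1 <= z2 -> z2 <= b -> f z1 <= f z2) /\
  (forall z1 z2 t, 0 <= z1 -> z1 < z2 -> z2 <= b -> 0 < t < 1 ->
     f (t * z1 + (1 - t) * z2) < t * f z1 + (1 - t) * f z2) /\
  C2_closed f b /\
  (forall z, 0 < z < b ->
     (exists x, A x /\
        (1/2) * sigma ^ 2 * Derive_n f 2 z - x * Derive f z + c x = gamma) /\
     (forall x, A x ->
        gamma <= (1/2) * sigma ^ 2 * Derive_n f 2 z - x * Derive f z + c x)) /\
  filterlim (Derive f) (at_right 0) (locally 0) /\
  filterlim (Derive f) (at_left b) (locally p).
Proof.
  intros f.
  destruct htheta as [hAt hmin]. destruct hgamma as [hgs hGb].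
  assert (hc0 : forall x, A x -> 0 <= c x).
  { intros x Ax. rewrite <- hctheta. apply hcmono; auto. }
  destruct (bound_R A c theta p hAt hmin hgrowth (Rlt_le _ _ hp)) as [RR [hR hRb]].
  assert (phimax : forall y, 0 <= y <= p -> exists x0, A x0 /\ theta <= x0 <= RR /\
     phi A c y = y*x0 - c x0 /\ forall x, A x -> y*x - c x <= phi A c y).
  { intros y hy. destruct (maximizer A c theta y RR hAclosed hAt hmin hcmono hcleft hctheta
      (proj1 hy) hR (hRb y hy)) as [x0 [Ax0 [Hx0 Hm]]].
    exists x0. split; auto. split. split; auto. rewrite (phi_eq A c y x0 Ax0 Hm).
    split; auto. }
  set (K := Rabs theta + Rabs RR).
  assert (philip : forall y1 y2, 0 <= y1 <= p -> 0 <= y2 <= p ->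
     Rabs (phi A c y1 - phi A c y2) <= K * Rabs (y1 - y2)).
  { intros y1 y2 h1 h2.
    destruct (phimax y1 h1) as [x1 [A1 [B1 [E1 M1]]]].
    destruct (phimax y2 h2) as [x2 [A2 [B2 [E2 M2]]]].
    assert (HK : forall x, theta <= x <= RR -> Rabs x <= K).
    { intros x hx. unfold K. unfold Rabs. repeat destruct Rcase_abs; lra. }
    specialize (M1 x2 A2). specialize (M2 x1 A1).
    assert (Q1 := Rabs_bound_lip (y1 - y2) x1 K (HK x1 B1)).
    assert (Q2 := Rabs_bound_lip (y1 - y2) x2 K (HK x2 B2)).
    assert (R1 := Rle_abs ((y1 - y2) * x1)). assert (R2 := Rle_abs ((y1 - y2) * x2)).
    assert (R3 := Rle_abs (-((y1 - y2) * x1))). assert (R4 := Rle_abs (-((y1 - y2) * x2))).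
    rewrite Rabs_Ropp in R3, R4.
    apply Rabs_le. split; nra. }
  assert (philow : forall y, 0 <= y <= p -> - (p * Rabs theta) <= phi A c y).
  { intros y hy. destruct (phimax y hy) as [x0 [_ [_ [_ M]]]].
    specialize (M theta hAt). rewrite hctheta in M.
    assert (y * Rabs theta <= p * Rabs theta) by (apply Rmult_le_compat_r; [apply Rabs_pos|lra]).
    assert (-(y*Rabs theta) <= y*theta).
    { destruct (Rle_or_lt 0 theta).
      - rewrite Rabs_right by lra. assert (0 <= y*theta) by (apply Rmult_le_pos; lra). lra.
      - rewrite Rabs_left by lra. lra. }
    lra. }
  assert (phistar : forall y, 0 <= y <= p -> - phi_star A c p <= phi A c y).
  { intros y hy. unfold phi_star.
    set (E := fun r => exists y, 0 <= y <= p /\ r = phi A c y).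
    destruct (Glb_Rbar_correct E) as [Hlb Hgl].
    assert (H1 : Rbar_le (Finite (- (p * Rabs theta))) (Glb_Rbar E)).
    { apply Hgl. intros r [y' [hy' ->]]. simpl. apply philow; auto. }
    assert (H2 : Rbar_le (Glb_Rbar E) (Finite (phi A c y))).
    { apply Hlb. exists y. auto. }
    destruct (Glb_Rbar E) as [r| |]; simpl in *; try contradiction. lra. }
  set (k := 1/2 * sigma^2).
  assert (hk : 0 < k) by (unfold k; assert (0 < sigma^2) by (apply pow_lt; lra); lra).
  set (phic := fun u => phi A c (clamp 0 p u)).
  assert (phic_lip : forall a b, Rabs (phic a - phic b) <= K * Rabs (a - b)).
  { intros a b'. unfold phic. eapply Rle_trans. apply philip; apply clamp_in; lra.
    apply Rmult_le_compat_l. unfold K; assert (0 <= Rabs theta) by apply Rabs_pos;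
    assert (0 <= Rabs RR) by apply Rabs_pos; lra. apply clamp_lip. }
  assert (HK0 : 0 <= K) by (unfold K; assert (0 <= Rabs theta) by apply Rabs_pos;
    assert (0 <= Rabs RR) by apply Rabs_pos; lra).
  set (mm := gamma - phi_star A c p).
  assert (hmm : 0 < mm) by (unfold mm; lra).
  assert (phic_low : forall u, mm <= phic u + gamma).
  { intros u. unfold phic, mm. assert (T := phistar (clamp 0 p u) (clamp_in 0 p u (Rlt_le _ _ hp))). lra. }
  set (Mb := Rabs (phi A c 0) + K * p + gamma).
  assert (phic_up : forall u, phic u + gamma <= Mb).
  { intros u. unfold Mb. assert (T := phic_lip u 0).
    assert (phic 0 = phi A c 0) by (unfold phic; rewrite clamp_id; auto; lra).
    assert (Rabs (u - 0) <= p \/ True) by auto.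
    assert (T2 := philip (clamp 0 p u) 0 (clamp_in 0 p u (Rlt_le _ _ hp)) (conj (Rle_refl 0) (Rlt_le _ _ hp))).
    assert (T3 := clamp_in 0 p u (Rlt_le _ _ hp)).
    rewrite (Rabs_right (clamp 0 p u - 0)) in T2 by lra.
    assert (K * (clamp 0 p u - 0) <= K * p) by (apply Rmult_le_compat_l; lra).
    assert (T4 := Rle_abs (phi A c 0)). assert (T5 := Rle_abs (phi A c (clamp 0 p u) - phi A c 0)).
    unfold phic. lra. }
  set (hc := fun u => / (phic u + gamma)).
  set (hlo := / Mb).
  assert (hMb : 0 < Mb) by (specialize (phic_low 0); specialize (phic_up 0); lra).
  assert (hhlo : 0 < hlo) by (apply Rinv_0_lt_compat; lra).
  assert (hc_low : forall u, hlo <= hc u).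
  { intros u. unfold hc, hlo. apply Rinv_le_contravar. specialize (phic_low u); lra. apply phic_up. }
  assert (hc_lip : forall a b, Rabs (hc a - hc b) <= (K / (mm*mm)) * Rabs (a - b)).
  { intros a b'. unfold hc. specialize (phic_low a) as La. specialize (phic_low b') as Lb.
    replace (/ (phic a + gamma) - / (phic b' + gamma)) with
      ((phic b' - phic a) * / ((phic a + gamma) * (phic b' + gamma))) by (field; lra).
    rewrite Rabs_mult. rewrite (Rabs_right (/ _)).
    2: { apply Rle_ge, Rlt_le, Rinv_0_lt_compat. nra. }
    rewrite Rabs_minus_sym. 
    assert (/ ((phic a + gamma) * (phic b' + gamma)) <= / (mm*mm)).
    { apply Rinv_le_contravar. nra. apply Rmult_le_compat; lra. }
    apply Rle_trans with (K*Rabs(a-b') * /(mm*mm)).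
    apply Rmult_le_compat. apply Rabs_pos. left; apply Rinv_0_lt_compat; nra.
    apply phic_lip. auto. right. unfold Rdiv. ring. }
  assert (hc_cont : forall x, continuous hc x) by (intros; eapply lip_cont; apply hc_lip).
  assert (hc_int : forall a b, ex_RInt hc a b) by (intros a b0; exact (ex_RInt_continuous hc a b0 (fun z _ => hc_cont z))).
  set (Gc := fun w => k * RInt hc 0 w).
  assert (G_eq : forall w, 0 <= w <= p -> Gfun A c sigma gamma w = Gc w).
  { intros w hw. unfold Gfun, Gc, k. f_equal. apply RInt_ext.
    intros x hx. rewrite Rmin_left in hx by lra. rewrite Rmax_right in hx by lra.
    unfold hc, phic. rewrite clamp_id by lra. reflexivity. }
  assert (G_inc : forall w1 w2, w1 <= w2 -> k * hlo * (w2 - w1) <= Gc w2 - Gc w1).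
  { intros w1 w2 hw. unfold Gc.
    rewrite <- (RInt_Chasles hc 0 w1 w2) by auto.
    assert (RInt (fun _ => hlo) w1 w2 <= RInt hc w1 w2).
    { apply RInt_le; [lra | apply ex_RInt_const | auto | intros; apply hc_low]. }
    rewrite RInt_const in H.
    change (scal (w2 - w1) hlo) with ((w2 - w1) * hlo) in H.
    change (plus (RInt hc 0 w1) (RInt hc w1 w2)) with (RInt hc 0 w1 + RInt hc w1 w2).
    nra. }
  assert (G_abs : forall w1 w2, k * hlo * Rabs (w1 - w2) <= Rabs (Gc w1 - Gc w2)).
  { intros w1 w2. destruct (Rle_or_lt w1 w2).
    - specialize (G_inc w1 w2 H). rewrite (Rabs_left1 (w1 - w2)) by lra.
      rewrite Rabs_minus_sym. rewrite Rabs_right. lra.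
      assert (0 <= k * hlo * (w2 - w1)) by (apply Rmult_le_pos; nra). lra.
    - specialize (G_inc w2 w1 (Rlt_le _ _ H)). rewrite (Rabs_right (w1 - w2)) by lra.
      rewrite Rabs_right. lra.
      assert (0 <= k * hlo * (w1 - w2)) by (apply Rmult_le_pos; nra). lra. }
  assert (hkl : 0 < k * hlo) by nra.
  assert (G_inj : forall w1 w2, Gc w1 = Gc w2 -> w1 = w2).
  { intros w1 w2 He. specialize (G_abs w1 w2). rewrite He, Rminus_diag, Rabs_R0 in G_abs.
    assert (Rabs (w1 - w2) <= 0) by (apply Rmult_le_reg_l with (k*hlo); lra).
    assert (T := Rabs_pos (w1 - w2)). assert (Rabs (w1 - w2) = 0) by lra.
    apply Rabs_eq_0 in H0. lra. }
  assert (Gc0 : Gc 0 = 0).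
  { unfold Gc. rewrite RInt_point. change (zero : R) with 0. ring. }
  assert (Gd : forall w, is_derive Gc w (k * hc w)).
  { intros w. unfold Gc. apply is_derive_scal.
    apply (is_derive_RInt hc (RInt hc 0) 0 w).
    apply filter_forall. intros x0; exact (RInt_correct hc 0 x0 (hc_int 0 x0)). auto. }
  assert (Gv : forall y, 0 <= y <= b -> Gc (v y) = y).
  { intros y hy. destruct (hv y hy) as [h1 h2]. rewrite <- G_eq; auto. }
  assert (Gp : Gc p = b) by (rewrite <- G_eq; auto; lra).
  assert (v0 : v 0 = 0).
  { apply G_inj. rewrite Gc0. apply Gv. lra. }
  assert (vb : v b = p).
  { apply G_inj. rewrite Gp. apply Gv. lra. }
  set (L := / (k * hlo)).
  assert (hL : 0 < L) by (apply Rinv_0_lt_compat; lra).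
  assert (v_lip : forall y1 y2, 0 <= y1 <= b -> 0 <= y2 <= b -> Rabs (v y1 - v y2) <= L * Rabs (y1 - y2)).
  { intros y1 y2 h1 h2. specialize (G_abs (v y1) (v y2)). rewrite !Gv in G_abs by auto.
    unfold L. apply Rmult_le_reg_l with (k*hlo); auto. rewrite <- Rmult_assoc, Rinv_r by lra. lra. }
  assert (v_str : forall y1 y2, 0 <= y1 -> y1 < y2 -> y2 <= b -> v y1 < v y2).
  { intros y1 y2 h1 h2 h3. apply Rnot_le_lt. intros Hl. specialize (G_inc _ _ Hl).
    rewrite !Gv in G_inc by lra. assert (0 <= k * hlo * (v y1 - v y2)) by (apply Rmult_le_pos; lra). lra. }
  assert (v_mono : forall y1 y2, 0 <= y1 -> y1 <= y2 -> y2 <= b -> v y1 <= v y2).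
  { intros y1 y2 h1 h2 h3. destruct (Req_dec y1 y2). subst; lra. left; apply v_str; lra. }
  set (vext := fun y => v (clamp 0 b y)).
  assert (vext_eq : forall y, 0 <= y <= b -> vext y = v y).
  { intros y hy. unfold vext. rewrite clamp_id; auto. }
  assert (vext_rng : forall y, 0 <= vext y <= p).
  { intros y. apply hv. apply clamp_in. lra. }
  assert (vext_lip : forall a b', Rabs (vext a - vext b') <= L * Rabs (a - b')).
  { intros a b'. unfold vext. eapply Rle_trans. apply v_lip; apply clamp_in; lra.
    apply Rmult_le_compat_l. lra. apply clamp_lip. }
  assert (vext_cont : forall x, continuous vext x) by (intros; eapply lip_cont; apply vext_lip).
  assert (vext_int : forall a b, ex_RInt vext a b)
    by (intros a b0; exact (ex_RInt_continuous vext a b0 (fun z _ => vext_cont z))).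
  set (F := fun z => RInt vext 0 z).
  assert (f_eq : forall z, 0 <= z <= b -> f z = F z).
  { intros z hz. unfold f, F. apply RInt_ext. intros x hx.
    rewrite Rmin_left in hx by lra. rewrite Rmax_right in hx by lra.
    rewrite vext_eq; auto. lra. }
  assert (Fd : forall z, is_derive F z (vext z)).
  { intros z. unfold F. apply (is_derive_RInt vext (RInt vext 0) 0 z).
    apply filter_forall. intros x0; exact (RInt_correct vext 0 x0 (vext_int 0 x0)). auto. }
  assert (Df : forall y, 0 < y < b -> Derive f y = vext y).
  { intros y hy. rewrite (Derive_ext_loc f F). apply is_derive_unique. apply Fd.
    eapply filter_imp. 2: apply (loc_int 0 b y hy). intros t ht. apply f_eq. lra. }
  set (dv := fun y => (phic (vext y) + gamma) / k).
  assert (vd : forall z, 0 < z < b -> is_derive vext z (dv z)).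
  { intros z hz. apply is_derive_Reals.
    assert (Prf : forall a, vext 0 <= a <= vext b -> derivable_pt Gc a).
    { intros a _. exists (k * hc a). apply is_derive_Reals. apply Gd. }
    assert (Pi : vext 0 <= vext z <= vext b).
    { rewrite !vext_eq by lra. split; apply v_mono; lra. }
    assert (Hder : derive_pt Gc (vext z) (Prf (vext z) Pi) = k * hc (vext z)).
    { apply derive_pt_eq_0. apply is_derive_Reals. apply Gd. }
    assert (Hcz : continuity_pt vext z) by (apply continuity_pt_filterlim; apply vext_cont).
    assert (Hcomp : forall x0, 0 <= x0 <= b -> comp Gc vext x0 = id x0).
    { intros x0 hx0. unfold comp, id. rewrite vext_eq; auto. }
    assert (Hneq : derive_pt Gc (vext z) (Prf (vext z) Pi) <> 0).
    { rewrite Hder. assert (0 < hc (vext z)) by (specialize (hc_low (vext z)); lra). nra. }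
    assert (Hl := derivable_pt_lim_recip_interv Gc vext 0 b z Prf Hcz hb hz Pi Hcomp Hneq).
    rewrite Hder in Hl.
    replace (dv z) with (1 / (k * hc (vext z))). exact Hl.
    { unfold dv, hc. specialize (phic_low (vext z)). intros. field. split; lra. } }
  assert (D2f : forall y, 0 < y < b -> Derive_n f 2 y = dv y).
  { intros y hy. simpl. rewrite (Derive_ext_loc _ vext).
    apply is_derive_unique. apply vd; auto.
    eapply filter_imp. 2: apply (loc_int 0 b y hy). intros t ht. apply Df. lra. }
  assert (dv_lip : forall a b', Rabs (dv a - dv b') <= (K * L / k) * Rabs (a - b')).
  { intros a b'. unfold dv.
    replace ((phic (vext a) + gamma) / k - (phic (vext b') + gamma) / k) with
      ((phic (vext a) - phic (vext b')) * / k) by (field; lra).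
    rewrite Rabs_mult, (Rabs_right (/ k)) by (apply Rle_ge, Rlt_le, Rinv_0_lt_compat; lra).
    apply Rle_trans with (K * (L * Rabs (a - b')) * / k).
    apply Rmult_le_compat_r. left; apply Rinv_0_lt_compat; lra.
    eapply Rle_trans. apply phic_lip. apply Rmult_le_compat_l; auto.
    right. unfold Rdiv. ring. }
  assert (dv_cont : forall x, continuous dv x) by (intros; eapply lip_cont; apply dv_lip).
  assert (ar0 : forall g h : R -> R, (forall y, 0 < y < b -> g y = h y) -> at_right 0 (fun y => h y = g y)).
  { intros g h Hg. exists (mkposreal b hb). intros y hy hy0. apply ball_R' in hy. simpl in hy.
    apply Rabs_def2 in hy. rewrite Hg; auto. lra. }
  assert (alb : forall g h : R -> R, (forall y, 0 < y < b -> g y = h y) -> at_left b (fun y => h y = g y)).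
  { intros g h Hg. exists (mkposreal b hb). intros y hy hy0. apply ball_R' in hy. simpl in hy.
    apply Rabs_def2 in hy. rewrite Hg; auto. lra. }
  assert (lim_r : forall h : R -> R, (forall x, continuous h x) -> filterlim h (at_right 0) (locally (h 0))).
  { intros h Hh. eapply filterlim_filter_le_1. apply filter_le_within. apply Hh. }
  assert (lim_l : forall h : R -> R, (forall x, continuous h x) -> filterlim h (at_left b) (locally (h b))).
  { intros h Hh. eapply filterlim_filter_le_1. apply filter_le_within. apply Hh. }
  assert (vext0 : vext 0 = 0) by (rewrite vext_eq; auto; lra).
  assert (vextb : vext b = p) by (rewrite vext_eq; auto; lra).
  assert (fF : forall z1 z2, 0 <= z1 <= b -> 0 <= z2 <= b -> f z2 - f z1 = RInt vext z1 z2).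
  { intros z1 z2 h1 h2. rewrite !f_eq by auto. unfold F.
    rewrite <- (RInt_Chasles vext 0 z1 z2) by auto.
    change (plus (RInt vext 0 z1) (RInt vext z1 z2)) with (RInt vext 0 z1 + RInt vext z1 z2). ring. }
  assert (Ilow : forall a b', 0 <= a -> a <= b' -> b' <= b -> vext a * (b' - a) <= RInt vext a b').
  { intros a b' h1 h2 h3.
    assert (Hc : RInt (fun _ => vext a) a b' = vext a * (b' - a)).
    { rewrite (@RInt_const R_CompleteNormedModule). change (scal (b' - a) (vext a)) with ((b' - a) * vext a). apply Rmult_comm. }
    rewrite <- Hc.
    apply RInt_le; auto. apply ex_RInt_const. intros x hx.
    rewrite !vext_eq by lra. apply v_mono; lra. }
  assert (Iup : forall a b', 0 <= a -> a <= b' -> b' <= b -> RInt vext a b' <= vext b' * (b' - a)).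
  { intros a b' h1 h2 h3.
    assert (Hc : RInt (fun _ => vext b') a b' = vext b' * (b' - a)).
    { rewrite (@RInt_const R_CompleteNormedModule). change (scal (b' - a) (vext b')) with ((b' - a) * vext b'). apply Rmult_comm. }
    rewrite <- Hc.
    apply RInt_le; auto. apply ex_RInt_const. intros x hx.
    rewrite !vext_eq by lra. apply v_mono; lra. }
  split; [|split; [|split; [|split; [|split]]]].
  - intros z hz. rewrite f_eq by auto. unfold F. apply RInt_ge_0; auto. lra.
    intros; apply vext_rng.
  - intros z1 z2 h1 h2 h3. assert (T := fF z1 z2 ltac:(lra) ltac:(lra)).
    assert (0 <= RInt vext z1 z2) by (apply RInt_ge_0; auto; intros; apply vext_rng). lra.
  - intros z1 z2 t h1 h2 h3 ht.
    set (m := t * z1 + (1 - t) * z2).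
    assert (hm1 : z1 < m) by (unfold m; nra).
    assert (hm2 : m < z2) by (unfold m; nra).
    set (m' := (m + z2) / 2).
    assert (hm3 : m < m' < z2) by (unfold m'; lra).
    assert (E1 := fF z1 m ltac:(lra) ltac:(lra)).
    assert (E2 := fF m m' ltac:(unfold m'; lra) ltac:(unfold m'; lra)).
    assert (E3 := fF m' z2 ltac:(unfold m'; lra) ltac:(lra)).
    assert (I1 := Iup z1 m ltac:(lra) ltac:(lra) ltac:(lra)).
    assert (I2 := Ilow m m' ltac:(lra) ltac:(unfold m'; lra) ltac:(unfold m'; lra)).
    assert (I3 := Ilow m' z2 ltac:(unfold m'; lra) ltac:(unfold m'; lra) ltac:(lra)).
    assert (S : vext m < vext m').
    { rewrite !vext_eq by (unfold m'; lra). apply v_str; unfold m'; lra. }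
    assert (Hmz1 : m - z1 = (1 - t) * (z2 - z1)) by (unfold m; ring).
    assert (Hz2m : z2 - m = t * (z2 - z1)) by (unfold m; ring).
    assert (P1 : 0 < (1 - t) * ((vext m' - vext m) * (z2 - m'))).
    { apply Rmult_lt_0_compat. lra. apply Rmult_lt_0_compat; lra. }
    assert (Q1 : t * (f m - f z1) <= t * (vext m * (m - z1))) by (apply Rmult_le_compat_l; lra).
    assert (Q2 : (1 - t) * (vext m * (m' - m) + vext m' * (z2 - m')) <= (1 - t) * (f z2 - f m))
      by (apply Rmult_le_compat_l; lra).
    assert (Z : t * (vext m * (m - z1)) = (1 - t) * (vext m * (z2 - m)))
      by (rewrite Hmz1, Hz2m; ring).
    assert (W : (1 - t) * (vext m * (m' - m) + vext m' * (z2 - m')) =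
                (1 - t) * (vext m * (z2 - m)) + (1 - t) * ((vext m' - vext m) * (z2 - m'))) by ring.
    lra.
  - split; [|split; [|split; [|split]]].
    + intros z hz. split; [|split].
      * exists (vext z). eapply is_derive_ext_loc. 2: apply Fd.
        eapply filter_imp. 2: apply (loc_int 0 b z hz). intros t ht. symmetry. apply f_eq. lra.
      * exists (dv z). eapply is_derive_ext_loc. 2: apply vd; auto.
        eapply filter_imp. 2: apply (loc_int 0 b z hz). intros t ht. symmetry. apply Df. lra.
      * apply continuous_ext_loc with dv. 
        eapply filter_imp. 2: apply (loc_int 0 b z hz). intros t ht. symmetry. apply D2f. lra.
        apply dv_cont.
    + exists 0. eapply filterlim_ext_loc. apply (ar0 (Derive f) vext). apply Df.
      assert (H := lim_r vext vext_cont). rewrite vext0 in H. exact H.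
    + exists p. eapply filterlim_ext_loc. apply (alb (Derive f) vext). apply Df.
      assert (H := lim_l vext vext_cont). rewrite vextb in H. exact H.
    + exists (dv 0). eapply filterlim_ext_loc. apply (ar0 (Derive_n f 2) dv). apply D2f.
      apply lim_r; auto.
    + exists (dv b). eapply filterlim_ext_loc. apply (alb (Derive_n f 2) dv). apply D2f.
      apply lim_l; auto.
  - intros z hz. rewrite D2f, Df by auto.
    set (w := vext z).
    destruct (phimax w (vext_rng z)) as [x0 [Ax0 [_ [E M]]]].
    assert (Hk : k * dv z = phi A c w + gamma).
    { unfold dv. fold w. unfold phic. rewrite clamp_id by apply vext_rng. field. lra. }
    split.
    + exists x0. split; auto. lra.
    + intros x Ax. specialize (M x Ax). lra.
  - split.
    + eapply filterlim_ext_loc. apply (ar0 (Derive f) vext). apply Df.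
      assert (H := lim_r vext vext_cont). rewrite vext0 in H. exact H.
    + eapply filterlim_ext_loc. apply (alb (Derive f) vext). apply Df.
      assert (H := lim_l vext vext_cont). rewrite vextb in H. exact H.
Qed.
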